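(* Let $\mu,\nu$ be integers with $\frac14(\mu+\nu)\le\mu\le\nu\le\frac34(\mu+\nu)$, let $M,N$ be integers with $q^{\mu-1}\le M<q^\mu$, $q^{\nu-1}\le N<q^\nu$, let $k\in\{\mu+\nu-4,\dots,\mu+\nu-1\}$, and for integers $m$ let $I(k,m)=\{n\in\mathbb{Z}: N/q\le n<N,\ q^k/m\le n<q^{k+1}/m\}$. Let $h,s$ be positive integers and $h_1,r,\mu_0,\mu_1,\mu_2$ integers with $\mu_0<\mu_1<\mu_2$ and $hsq^{\mu_1-\mu_2}\notin\mathbb{Z}$. Then for every interval $I_1\subseteq[q^{\mu-2},q^\mu)$, $$\Big|\sum_{m\in I_1}e\Big(\frac{h_1rm}{q^{\mu_2}}\Big)\sum_{n\in I(k,m)}e\big(hsnq^{\mu_1-\mu_2}\big)\Big|\ll\big(shq^{3(\mu_2-\mu_1)}\big)^{1/2}q^{\frac78(\mu+\nu)}.$$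
   Context: $q\ge2$ is a fixed integer, $e(x)=\exp(2\pi ix)$, and sums over $m\in I_1$ run over integers. The implied constant depends at most on $q$. *)

(* Defs.v *)
From Stdlib Require Import Reals ZArith.
Open Scope R_scope.

Fixpoint sumZ (a : Z) (len : nat) (f : Z -> R) : R :=
  match len with
  | O => 0
  | S l => f a + sumZ (a + 1)%Z l f
  end.

(* sum over the integers m with A <= m <= B (empty if B < A) *)
Definition sumZ_cc (A B : Z) (f : Z -> R) : R :=
  sumZ A (Z.to_nat (B - A + 1)) f.

Definition inI (q N k m n : Z) : Prop :=
  IZR N / IZR q <= IZR n /\ IZR n < IZR N /\
  powerRZ (IZR q) k / IZR m <= IZR n /\ IZR n < powerRZ (IZR q) (k + 1) / IZR m.

Definition indI (q N k m n : Z) : R :=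
  if Rle_dec (IZR N / IZR q) (IZR n) then
  if Rlt_dec (IZR n) (IZR N) then
  if Rle_dec (powerRZ (IZR q) k / IZR m) (IZR n) then
  if Rlt_dec (IZR n) (powerRZ (IZR q) (k + 1) / IZR m) then 1 else 0
  else 0 else 0 else 0.

(* sum_{n in I(k,m)} g n ; every element of I(k,m) lies in [0, N) when N > 0 *)
Definition sumI (q N k m : Z) (g : Z -> R) : R :=
  sumZ 0 (Z.to_nat N) (fun n => indI q N k m n * g n).

(* phase theta with e(theta) = exp(2 pi i theta):
   theta = h1 r m / q^mu2 + h s n q^(mu1-mu2) *)
Definition phase (q h1 r mu2 h s mu1 m n : Z) : R :=
  IZR h1 * IZR r * IZR m / powerRZ (IZR q) mu2
  + IZR h * IZR s * IZR n * powerRZ (IZR q) (mu1 - mu2).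

(* real and imaginary parts of
   S = sum_{A<=m<=B} e(h1 r m/q^mu2) sum_{n in I(k,m)} e(h s n q^(mu1-mu2)) *)
Definition S_re (q N k h1 r mu2 h s mu1 A B : Z) : R :=
  sumZ_cc A B (fun m => sumI q N k m
    (fun n => cos (2 * PI * phase q h1 r mu2 h s mu1 m n))).
Definition S_im (q N k h1 r mu2 h s mu1 A B : Z) : R :=
  sumZ_cc A B (fun m => sumI q N k m
    (fun n => sin (2 * PI * phase q h1 r mu2 h s mu1 m n))).

Definition S_abs (q N k h1 r mu2 h s mu1 A B : Z) : R :=
  sqrt (S_re q N k h1 r mu2 h s mu1 A B ^ 2 + S_im q N k h1 r mu2 h s mu1 A B ^ 2).

(* Main.v *)
Require Import Defs.
From Stdlib Require Import Reals ZArith Lra Lia.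
Open Scope R_scope.

Lemma sumZ_split f n1 : forall n2 a,
  sumZ a (n1 + n2) f = sumZ a n1 f + sumZ (a + Z.of_nat n1) n2 f.
Proof.
  induction n1 as [|n1 IH]; intros n2 a; simpl.
  - rewrite Z.add_0_r; ring.
  - rewrite IH. replace (a + 1 + Z.of_nat n1)%Z with (a + Z.pos (Pos.of_succ_nat n1))%Z by lia. ring.
Qed.

Lemma sumZ_bound f K (HK : forall n, Rabs (f n) <= K) : forall len a,
  Rabs (sumZ a len f) <= INR len * K.
Proof.
  induction len as [|len IH]; intros a.
  - simpl; rewrite Rabs_R0; lra.
  - rewrite S_INR; cbn [sumZ]. eapply Rle_trans; [apply Rabs_triang|].
    specialize (IH (a+1)%Z). specialize (HK a). lra.
Qed.

Lemma sumZ_tele f G K : (forall n, K * f n = G (n + 1)%Z - G n) ->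
  forall len a, K * sumZ a len f = G (a + Z.of_nat len)%Z - G a.
Proof.
  intros H; induction len as [|len IH]; intros a; simpl.
  - rewrite Z.add_0_r; ring.
  - rewrite Rmult_plus_distr_l, IH, H.
    replace (a + 1 + Z.of_nat len)%Z with (a + Z.pos (Pos.of_succ_nat len))%Z by lia. ring.
Qed.

Lemma periodic_bound f p : (1 <= p)%nat -> (forall n, Rabs (f n) <= 1) ->
  (forall a, sumZ a p f = 0) -> forall len a, Rabs (sumZ a len f) <= INR p.
Proof.
  intros Hp Hf H0 len.
  induction len as [len IH] using (well_founded_induction Wf_nat.lt_wf).
  intros a. destruct (Nat.lt_ge_cases len p) as [Hl|Hl].
  - eapply Rle_trans; [apply (sumZ_bound f 1 Hf)|].
    rewrite Rmult_1_r. apply le_INR; lia.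
  - replace len with (p + (len - p))%nat by lia.
    rewrite sumZ_split, H0, Rplus_0_l. apply IH. lia.
Qed.

Lemma tail_zero (ind g : Z -> R) b : (forall j, (b <= j)%Z -> ind j = 0) ->
  forall len a, (b <= a)%Z -> sumZ a len (fun n => ind n * g n) = 0.
Proof.
  intros H; induction len as [|len IH]; intros a Ha; simpl; [reflexivity|].
  rewrite H by lia. rewrite IH by lia. ring.
Qed.

Lemma interval_sum (ind g : Z -> R) :
  (forall n, ind n = 0 \/ ind n = 1) ->
  (forall a j, ind a = 1 -> ind (a+1)%Z <> 1 -> (a + 1 <= j)%Z -> ind j = 0) ->
  forall len a, (ind a = 1 -> exists l, sumZ a len (fun n => ind n * g n) = sumZ a l g)
    /\ exists a' l, sumZ a len (fun n => ind n * g n) = sumZ a' l g.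
Proof.
  intros H01 Hconv; induction len as [|len IH]; intros a.
  - split; [intros _; exists 0%nat; reflexivity| exists a, 0%nat; reflexivity].
  - simpl. destruct (IH (a+1)%Z) as [IH1 IH2].
    destruct (H01 a) as [Ha|Ha].
    + rewrite Ha. split; [intros; lra|].
      destruct IH2 as [a' [l E]]. exists a', l. rewrite E; ring.
    + rewrite Ha.
      assert (E : exists l, g a + sumZ (a+1) len (fun n => ind n * g n) = sumZ a l g).
      { destruct (Req_dec (ind (a+1)%Z) 1) as [H1|H1].
        - destruct (IH1 H1) as [l El]. exists (S l). simpl. rewrite El. reflexivity.
        - exists 1%nat. simpl. rewrite (tail_zero ind g (a+1)%Z); [reflexivity| |lia].
          intros j Hj; eapply Hconv; eauto. }
      destruct E as [l El]. rewrite Rmult_1_l, El.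
      split; [intros; exists l; reflexivity | exists a, l; reflexivity].
Qed.

Lemma sumZ_ext f g : (forall n, f n = g n) -> forall len a, sumZ a len f = sumZ a len g.
Proof. intros H; induction len; intros a; simpl; [reflexivity| rewrite H, IHlen; reflexivity]. Qed.

Lemma trig_sums_bound c al p k : (1 <= p)%nat -> sin (PI * al) <> 0 ->
  al * INR p = INR k -> forall len a,
  Rabs (sumZ a len (fun n => cos (2*PI*(c + IZR n * al)))) <= INR p /\
  Rabs (sumZ a len (fun n => sin (2*PI*(c + IZR n * al)))) <= INR p.
Proof.
  intros Hp Hs Hk len a.
  set (ps := fun n => 2*PI*(c + IZR n * al)).
  assert (Hsh : forall n, ps (n+1)%Z = ps n + 2 * (PI*al)).
  { intros n; unfold ps; rewrite plus_IZR; ring. }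
  assert (Hper : forall a, ps (a + Z.of_nat p)%Z = ps a + 2 * INR k * PI).
  { intros b; unfold ps; rewrite plus_IZR, <- INR_IZR_INZ, <- Hk; ring. }
  split.
  - apply periodic_bound; auto.
    + intros; apply Rabs_le; pose proof (COS_bound (2 * PI * (c + IZR n * al))); lra.
    + intros b.
      assert (E: 2 * sin (PI*al) * sumZ b p (fun n => cos (ps n)) = 0).
      { rewrite (sumZ_tele (fun n => cos (ps n)) (fun n => sin (ps n - PI*al)) (2 * sin (PI*al))).
        - rewrite Hper. replace (ps b + 2 * INR k * PI - PI * al) with (ps b - PI*al + 2 * INR k * PI) by ring.
          rewrite sin_period; ring.
        - intros n; rewrite Hsh.
          replace (ps n + 2 * (PI * al) - PI*al) with (ps n + PI*al) by ring.
          rewrite sin_plus, sin_minus; ring. }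
      apply Rmult_integral in E; destruct E as [E|E]; [exfalso; apply Hs; lra| exact E].
  - apply periodic_bound; auto.
    + intros; apply Rabs_le; pose proof (SIN_bound (2 * PI * (c + IZR n * al))); lra.
    + intros b.
      assert (E: 2 * sin (PI*al) * sumZ b p (fun n => sin (ps n)) = 0).
      { rewrite (sumZ_tele (fun n => sin (ps n)) (fun n => - cos (ps n - PI*al)) (2 * sin (PI*al))).
        - rewrite Hper. replace (ps b + 2 * INR k * PI - PI * al) with (ps b - PI*al + 2 * INR k * PI) by ring.
          rewrite cos_period; ring.
        - intros n; rewrite Hsh.
          replace (ps n + 2 * (PI * al) - PI*al) with (ps n + PI*al) by ring.
          rewrite cos_plus, cos_minus; ring. }
      apply Rmult_integral in E; destruct E as [E|E]; [exfalso; apply Hs; lra| exact E].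
Qed.

Lemma indI_01 q N k m n : indI q N k m n = 0 \/ indI q N k m n = 1.
Proof.
  unfold indI; repeat match goal with |- context [if ?c then _ else _] => destruct c end; auto.
Qed.

Lemma indI_conv q N k m a j : indI q N k m a = 1 -> indI q N k m (a+1)%Z <> 1 ->
  (a + 1 <= j)%Z -> indI q N k m j = 0.
Proof.
  intros H1 H2 Hj.
  assert (Ea : IZR (a+1) = IZR a + 1) by (rewrite plus_IZR; ring).
  assert (Ej : IZR (a+1) <= IZR j) by (apply IZR_le; exact Hj).
  revert H1 H2. unfold indI.
  repeat match goal with |- context [if ?c then _ else _] => destruct c end;
  intros; try lra.
Qed.

Lemma sumI_bound q N k m c al p kk : (1 <= p)%nat -> sin (PI * al) <> 0 ->
  al * INR p = INR kk ->
  (forall g, (forall n, g n = cos (2*PI*(c + IZR n * al))) -> Rabs (sumI q N k m g) <= INR p) /\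
  (forall g, (forall n, g n = sin (2*PI*(c + IZR n * al))) -> Rabs (sumI q N k m g) <= INR p).
Proof.
  intros Hp Hs Hk. split; intros g Hg; unfold sumI;
  destruct (interval_sum (indI q N k m) g (indI_01 q N k m) (indI_conv q N k m) (Z.to_nat N) 0)
    as [_ [a' [l E]]]; rewrite E; rewrite (sumZ_ext _ _ Hg);
  destruct (trig_sums_bound c al p kk Hp Hs Hk l a'); assumption.
Qed.

Lemma sqrt_sum_sq a b : sqrt (a^2 + b^2) <= Rabs a + Rabs b.
Proof.
  rewrite <- (sqrt_pow2 (Rabs a + Rabs b)) by (pose proof (Rabs_pos a); pose proof (Rabs_pos b); lra).
  pose proof (pow2_ge_0 a); pose proof (pow2_ge_0 b); pose proof (pow2_ge_0 (Rabs a + Rabs b)).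
  apply sqrt_le_1; [lra| lra|].
  rewrite <- (pow2_abs a), <- (pow2_abs b). pose proof (Rabs_pos a); pose proof (Rabs_pos b); nra.
Qed.

Theorem mainTheorem7 (q : Z) (hq : (2 <= q)%Z) :
  exists C : R, 0 < C /\
  forall (mu nu M N k h s h1 r mu0 mu1 mu2 A B : Z),
    IZR (mu + nu) / 4 <= IZR mu ->
    IZR mu <= IZR nu ->
    IZR nu <= 3 / 4 * IZR (mu + nu) ->
    powerRZ (IZR q) (mu - 1) <= IZR M -> IZR M < powerRZ (IZR q) mu ->
    powerRZ (IZR q) (nu - 1) <= IZR N -> IZR N < powerRZ (IZR q) nu ->
    (mu + nu - 4 <= k <= mu + nu - 1)%Z ->
    (0 < h)%Z -> (0 < s)%Z ->
    (mu0 < mu1)%Z -> (mu1 < mu2)%Z ->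
    ~ (exists z : Z, IZR h * IZR s * powerRZ (IZR q) (mu1 - mu2) = IZR z) ->
    powerRZ (IZR q) (mu - 2) <= IZR A -> IZR B < powerRZ (IZR q) mu ->
    S_abs q N k h1 r mu2 h s mu1 A B
      <= C * sqrt (IZR s * IZR h * powerRZ (IZR q) (3 * (mu2 - mu1)))
           * Rpower (IZR q) (7 / 8 * IZR (mu + nu)).
Proof.
  exists 2. split; [lra|].
  intros mu nu M N k h s h1 r mu0 mu1 mu2 A B H1 H2 H3 _ _ _ _ _ Hh Hs _ H12 Hnz HA HB.
  remember (IZR q) as Q eqn:HQdef.
  assert (HQ : 2 <= Q) by (rewrite HQdef; apply IZR_le; exact hq).
  rewrite plus_IZR in H1, H3.
  assert (Hmu : (0 <= mu)%Z) by (apply le_IZR; lra).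
  set (dn := Z.to_nat (mu2 - mu1)).
  assert (Hdn : Z.of_nat dn = (mu2 - mu1)%Z) by (unfold dn; lia).
  set (p := (Z.to_nat q ^ dn)%nat).
  assert (Hp : INR p = Q ^ dn).
  { unfold p; rewrite pow_INR, INR_IZR_INZ, Z2Nat.id by lia; rewrite HQdef; reflexivity. }
  assert (Hp1 : (1 <= p)%nat).
  { assert (p <> 0%nat) by (unfold p; apply Nat.pow_nonzero; lia). lia. }
  assert (HQd : 1 <= Q ^ dn) by (apply pow_R1_Rle; lra).
  set (pw := powerRZ Q (mu1 - mu2)).
  assert (Hpw : pw * Q ^ dn = 1).
  { unfold pw; rewrite pow_powerRZ, Hdn, <- powerRZ_add by lra.
    replace (mu1 - mu2 + (mu2 - mu1))%Z with 0%Z by lia. reflexivity. }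
  set (al := IZR h * IZR s * pw).
  set (kk := Z.to_nat (h * s)).
  assert (Hk : al * INR p = INR kk).
  { rewrite Hp. unfold kk; rewrite INR_IZR_INZ, Z2Nat.id by lia.
    rewrite mult_IZR. unfold al. rewrite Rmult_assoc, Hpw. ring. }
  assert (Hsin : sin (PI * al) <> 0).
  { intros E. apply sin_eq_0_0 in E. destruct E as [z Ez].
    apply Hnz. exists z. fold pw. fold al.
    pose proof PI_RGT_0. apply (Rmult_eq_reg_l PI); [|lra]. lra. }
  assert (Hph : forall m n, phase q h1 r mu2 h s mu1 m n =
     IZR h1 * IZR r * IZR m / powerRZ Q mu2 + IZR n * al).
  { intros; unfold phase, al, pw; rewrite <- HQdef; ring. }
  set (X := INR (Z.to_nat (B - A + 1))).
  assert (Hre : Rabs (S_re q N k h1 r mu2 h s mu1 A B) <= X * INR p).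
  { unfold S_re, sumZ_cc. apply sumZ_bound. intros m.
    destruct (sumI_bound q N k m (IZR h1 * IZR r * IZR m / powerRZ Q mu2) al p kk Hp1 Hsin Hk) as [Hc _].
    apply Hc. intros n; rewrite Hph; reflexivity. }
  assert (Him : Rabs (S_im q N k h1 r mu2 h s mu1 A B) <= X * INR p).
  { unfold S_im, sumZ_cc. apply sumZ_bound. intros m.
    destruct (sumI_bound q N k m (IZR h1 * IZR r * IZR m / powerRZ Q mu2) al p kk Hp1 Hsin Hk) as [_ Hc].
    apply Hc. intros n; rewrite Hph; reflexivity. }
  assert (Habs : S_abs q N k h1 r mu2 h s mu1 A B <= 2 * (X * INR p)).
  { unfold S_abs. eapply Rle_trans; [apply sqrt_sum_sq|]. lra. }
  assert (HQmu : powerRZ Q mu = Q ^ Z.to_nat mu).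
  { rewrite pow_powerRZ, Z2Nat.id by lia; reflexivity. }
  assert (HX : X <= powerRZ Q mu).
  { unfold X. destruct (Z_lt_le_dec (B - A + 1) 0) as [Hn|Hn].
    - replace (Z.to_nat (B - A + 1)) with 0%nat by lia; simpl. rewrite HQmu. apply pow_le; lra.
    - rewrite INR_IZR_INZ, Z2Nat.id by lia.
      assert (0 < powerRZ Q (mu - 2)) by (apply powerRZ_lt; lra).
      assert (HA1 : (1 <= A)%Z) by (assert (HA0 : 0 < IZR A) by (eapply Rlt_le_trans; [exact H| exact HA]); apply lt_IZR in HA0; lia).
      apply IZR_le in HA1. rewrite !plus_IZR, minus_IZR. pose proof (Rlt_le_trans _ _ _ HB (Rle_refl _)). lra. }
  assert (HR : powerRZ Q mu <= Rpower Q (7 / 8 * IZR (mu + nu))).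
  { rewrite HQmu, <- Rpower_pow by lra. apply Rle_Rpower; [lra|].
    rewrite INR_IZR_INZ, Z2Nat.id by lia. rewrite plus_IZR. lra. }
  assert (HS : INR p <= sqrt (IZR s * IZR h * powerRZ Q (3 * (mu2 - mu1)))).
  { rewrite Hp. rewrite <- (sqrt_pow2 (Q ^ dn)) by lra.
    apply sqrt_le_1; [nra| |].
    - assert (1 <= IZR s) by (apply IZR_le; lia). assert (1 <= IZR h) by (apply IZR_le; lia).
      assert (0 < powerRZ Q (3 * (mu2 - mu1))) by (apply powerRZ_lt; lra). apply Rmult_le_pos; [|lra]; apply Rmult_le_pos; lra.
    - replace (3 * (mu2 - mu1))%Z with (Z.of_nat (3 * dn)) by lia.
      rewrite <- pow_powerRZ. replace (3 * dn)%nat with (dn + dn + dn)%nat by lia.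
      rewrite !pow_add.
      assert (1 <= IZR s) by (apply IZR_le; lia). assert (1 <= IZR h) by (apply IZR_le; lia).
      assert (1 <= IZR s * IZR h) by nra. set (y := Q ^ dn) in *. assert (y^2 <= y*y*y) by nra. assert (0 <= y*y*y) by nra. assert (y*y*y <= IZR s * IZR h * (y*y*y)) by nra. lra. }
  assert (0 <= X) by (unfold X; apply pos_INR).
  assert (0 <= INR p) by apply pos_INR.
  eapply Rle_trans; [exact Habs|].
  replace (2 * (X * INR p)) with (2 * INR p * X) by ring.
  apply Rmult_le_compat; [lra|lra| lra| lra].
Qed.
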